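(* Fix $\alpha,\beta\in(0,1)$ and consider the decoupled process with parameters $(G,r,T,\alpha,\beta)$. For $t\in\mathbb{N}$ let $u,v$ be chosen uniformly and independently from $B_{t,G}(r)$, independently of the process, and let $p_t=\Pr[\mathrm{origin}_t(u)=\mathrm{origin}_t(v)]$ (probability over both the process and the choice of $u,v$). Let $\lambda(t)=\dfrac{|\{x:g_t(x)=+1\}|-|\{x:g_t(x)=-1\}|}{|B_{t,G}(r)|}$. If $p_t\to0$ as $t\to\infty$, then for every $\eta>0$ there is $t_0$ such that $\Pr[|\lambda(t)-\mathbb{E}\lambda(t)|>\eta]<\eta$ for all $t\ge t_0$. Moreover, if $p_t\le e^{-c_1t^{c_2}}$ for constants $c_1,c_2>0$, then there are constants $c_3,c_4,c_5,c_6>0$ with $\Pr[|\lambda(t)-\mathbb{E}\lambda(t)|>e^{-c_3t^{c_4}}]\le e^{-c_5t^{c_6}}$ for all sufficiently large $t$.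
   Context: Decoupled process. Fix $\alpha,\beta\in[0,1]$, a connected locally finite undirected graph $G$, root $r$, and a BFS spanning tree $T$ of $G$ rooted at $r$, oriented away from $r$, with parent map $p$. Let $Z_0=+1$, $Z_1,Z_2,\dots$ i.i.d. uniform on $\{-1,+1\}$, $Z_\infty=\bot$. Counter $\mathrm{count}_0=1$; $\mathrm{origin}_0(r)=0$ (and always $0$), $\mathrm{origin}_0(v)=\infty$ for $v\ne r$; $g_t(v)=Z_{\mathrm{origin}_t(v)}$. Update from $t$ to $t+1$ (independent choices): if $g_t(v)=g_t(p(v))=\bot$ then $\mathrm{origin}_{t+1}(v)=\infty$; nodes with $g_t(v)=\bot\ne g_t(p(v))$ are processed sequentially in a fixed order: w.p. $1-\alpha$, $\mathrm{origin}_{t+1}(v)=\mathrm{origin}_t(p(v))$; w.p. $\alpha$, $\mathrm{origin}_{t+1}(v)$ is the current counter value and the counter is then incremented; if $g_t(v)\ne\bot$, $v\ne r$: w.p. $\beta$, $\mathrm{origin}_{t+1}(v)=\mathrm{origin}_t(p(v))$, otherwise unchanged. $B_{t,G}(r)=\{x:d_G(r,x)\le t\}$; this is exactly the set of nodes with $g_t(x)\ne\bot$. *)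

(* Defs.v *)
From HB Require Import structures.
From mathcomp Require Import all_boot all_order all_algebra.
From mathcomp Require Import all_classical all_reals all_analysis.

Set Implicit Arguments.
Unset Strict Implicit.
Unset Printing Implicit Defensive.

Import Order.TTheory GRing.Theory Num.Theory.
Local Open Scope ring_scope.

Definition distr (R : Type) (A : Type) := seq (R * A).

Section Distr.
Variable R : realType.

Definition dret (A : Type) (a : A) : distr R A := [:: (1, a)].

Definition dbind (A B : Type) (d : distr R A) (f : A -> distr R B) : distr R B :=
  flatten [seq [seq (x.1 * y.1, y.2) | y <- f x.2] | x <- d].

Definition Prob (A : Type) (d : distr R A) (P : A -> bool) : R :=
  \sum_(x <- d) (if P x.2 then x.1 else 0).

Definition Expect (A : Type) (d : distr R A) (f : A -> R) : R :=
  \sum_(x <- d) x.1 * f x.2.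

Fixpoint dfold (A B : Type) (f : B -> A -> distr R A) (l : seq B) (s : A)
  : distr R A :=
  match l with
  | [::] => dret s
  | v :: l' => dbind (f v s) (dfold f l')
  end.
End Distr.

Section Graph.
Variables (V : eqType) (nb : V -> seq V) (r : V).

(* gball t = B_{t,G}(r) = { x | d_G(r,x) <= t }, enumerated without repetition *)
Fixpoint gball (t : nat) : seq V :=
  if t is t'.+1 then undup (gball t' ++ flatten [seq nb x | x <- gball t'])
  else [:: r].

(* p is the parent map of a BFS spanning tree rooted at r:
   every v <> r is adjacent to p v, and d(r, p v) = d(r, v) - 1. *)
Definition is_bfs_parent (p : V -> V) : Prop :=
  forall v, v != r ->
    p v \in nb v /\ (forall t, v \in gball t.+1 -> p v \in gball t).
End Graph.

(* State: origin : V -> option nat (None = infinity), and the list zs of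
   the signs Z_0, ..., Z_{count-1} drawn so far (true = +1, false = -1);
   count = size zs.  The i.i.d. signs Z_i are drawn lazily, at the moment
   the counter value i is first used. *)
Record pstate (V : Type) := PState { origin : V -> option nat; zs : seq bool }.

Section Process.
Variables (R : realType) (V : eqType) (nb : V -> seq V) (r : V) (p : V -> V)
          (alpha beta : R).

(* g_t(v) = Z_{origin_t(v)}, with Z_infinity = bot (None). *)
Definition gval (s : pstate V) (v : V) : option bool :=
  match origin s v with
  | Some i => Some (nth true (zs s) i)
  | None => None
  end.

Definition upd (f : V -> option nat) (v : V) (x : option nat) : V -> option nat :=
  fun w => if w == v then x else f w.

(* a node v with g_t(v) = bot <> g_t(p v); o = origin_t (old values) *)
Definition step_frontier (o : V -> option nat) (v : V) (s : pstate V)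
  : distr R (pstate V) :=
  [:: (1 - alpha, PState (upd (origin s) v (o (p v))) (zs s));
      (alpha / 2, PState (upd (origin s) v (Some (size (zs s)))) (rcons (zs s) true));
      (alpha / 2, PState (upd (origin s) v (Some (size (zs s)))) (rcons (zs s) false))].

(* a node v <> r with g_t(v) <> bot *)
Definition step_inner (o : V -> option nat) (v : V) (s : pstate V)
  : distr R (pstate V) :=
  [:: (beta, PState (upd (origin s) v (o (p v))) (zs s)); (1 - beta, s)].

(* one step from time t to t+1; nodes with g_t(v) = g_t(p v) = bot keep
   origin = infinity.  Candidate nodes are enumerated through the balls
   (all nodes with g_t <> bot lie in B_t, and the frontier lies in B_{t+1}). *)
Definition pstep (t : nat) (s : pstate V) : distr R (pstate V) :=
  let o := origin s in
  let frontier := [seq v <- gball nb r t.+1 |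
                    (gval s v == None) && (gval s (p v) != None)] in
  let inner := [seq v <- gball nb r t | (gval s v != None) && (v != r)] in
  dbind (dfold (step_frontier o) frontier s) (dfold (step_inner o) inner).

Definition pinit : pstate V :=
  PState (fun v => if v == r then Some 0%N else None) [:: true].

Fixpoint proc (t : nat) : distr R (pstate V) :=
  if t is t'.+1 then dbind (proc t') (pstep t') else dret R pinit.

Definition lambda_of (t : nat) (s : pstate V) : R :=
  ((count (fun x => gval s x == Some true) (gball nb r t))%:R
   - (count (fun x => gval s x == Some false) (gball nb r t))%:R)
  / (size (gball nb r t))%:R.

Definition coinc_of (t : nat) (s : pstate V) : R :=
  (count (fun uv : V * V => origin s uv.1 == origin s uv.2)
     [seq (u, v) | u <- gball nb r t, v <- gball nb r t])%:R
  / ((size (gball nb r t))%:R ^+ 2).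

Definition p_coinc (t : nat) : R := Expect (proc t) (coinc_of t).

Definition Elambda (t : nat) : R := Expect (proc t) (lambda_of t).

Definition dev_prob (t : nat) (eta : R) : R :=
  Prob (proc t) (fun s => eta < `|lambda_of t s - Elambda t|).
End Process.

(* Main.v *)
Require Import Defs.
From HB Require Import structures.
From mathcomp Require Import all_boot all_order all_algebra.
From mathcomp Require Import all_classical all_reals all_analysis.
From mathcomp Require Import ring lra zify.
Set Implicit Arguments.
Unset Strict Implicit.
Import Order.TTheory GRing.Theory Num.Theory.
Local Open Scope classical_set_scope.
Local Open Scope ring_scope.

Section Gen.
Variable R : realType.

Lemma Expect_cons A (x : R * A) (d : distr R A) f :
  Expect (x :: d) f = x.1 * f x.2 + Expect d f.
Proof. by rewrite /Expect big_cons. Qed.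

Lemma Expect_nil A f : Expect ([::] : distr R A) f = 0.
Proof. by rewrite /Expect big_nil. Qed.

Lemma Expect_dbind A B (d : distr R A) (g : A -> distr R B) f :
  Expect (dbind d g) f = Expect d (fun x => Expect (g x) f).
Proof.
elim: d => [|x d IH]; first by rewrite /dbind /= !Expect_nil.
rewrite Expect_cons -IH /dbind map_cons /= /Expect big_cat /= big_map.
congr (_ + _); rewrite mulr_sumr; apply: eq_bigr => y _ /=; by rewrite mulrA.
Qed.

Lemma Expect_dret A (a : A) f : Expect (dret R a) f = f a.
Proof. by rewrite /dret Expect_cons Expect_nil mul1r addr0. Qed.

Lemma Expect_sum A (d : distr R A) (I : Type) (l : seq I) (F : I -> A -> R) :
  Expect d (fun s => \sum_(i <- l) F i s) = \sum_(i <- l) Expect d (F i).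
Proof.
rewrite /Expect; under eq_bigr do rewrite mulr_sumr; exact: exchange_big.
Qed.

Lemma Expect_scale A (d : distr R A) c f :
  Expect d (fun s => c * f s) = c * Expect d f.
Proof. rewrite /Expect mulr_sumr; apply: eq_bigr => x _; ring. Qed.

Lemma Expect_ext A (d : distr R A) f g :
  (forall x, List.In x d -> f x.2 = g x.2) -> Expect d f = Expect d g.
Proof.
elim: d => [|x d IH] H; first by rewrite !Expect_nil.
rewrite !Expect_cons H; last by left.
by rewrite IH // => y Hy; apply: H; right.
Qed.

Lemma Expect_eqf A (d : distr R A) f g : f =1 g -> Expect d f = Expect d g.
Proof. by move=> H; rewrite /Expect; apply: eq_bigr => x _; rewrite H. Qed.

Lemma Expect_le A (d : distr R A) f g :
  (forall x, List.In x d -> x.1 * f x.2 <= x.1 * g x.2) -> Expect d f <= Expect d g.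
Proof.
elim: d => [|x d IH] H; first by rewrite !Expect_nil.
rewrite !Expect_cons lerD //; first by apply: H; left.
by apply: IH => y Hy; apply: H; right.
Qed.

Lemma Prob_le A (d : distr R A) P g :
  (forall x, List.In x d -> (if P x.2 then x.1 else 0) <= x.1 * g x.2) ->
  Prob d P <= Expect d g.
Proof.
elim: d => [|x d IH] H; first by rewrite /Prob /Expect !big_nil.
rewrite /Prob /Expect !big_cons lerD //; first by apply: H; left.
by apply: IH => y Hy; apply: H; right.
Qed.

Lemma Expect_var A (d : distr R A) f m :
  Expect d (fun s => (f s - m) ^+ 2) =
  Expect d (fun s => f s ^+ 2) - 2 * m * Expect d f + m ^+ 2 * Expect d (fun _ => 1).
Proof.
elim: d => [|x d IH]; rewrite ?Expect_nil ?Expect_cons; first by ring.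
rewrite IH; ring.
Qed.

Definition dsat A (P : R * A -> Prop) (d : distr R A) :=
  forall x, List.In x d -> P x.

Lemma dsat_dbind A B (d : distr R A) (g : A -> distr R B) (P : A -> Prop) (Q : B -> Prop) :
  dsat (fun x => 0 <= x.1 /\ P x.2) d ->
  (forall a, P a -> dsat (fun y => 0 <= y.1 /\ Q y.2) (g a)) ->
  dsat (fun y => 0 <= y.1 /\ Q y.2) (dbind d g).
Proof.
elim: d => [|x d IH] Hd Hg; first by move=> y [].
rewrite /dbind map_cons /= => y /List.in_app_iff [].
  move/List.in_map_iff => [z [<- Hz]] /=.
  have [H1 H2] := Hd x (or_introl erefl).
  have [H3 H4] := Hg _ H2 z Hz.
  by split => //; apply: mulr_ge0.
move=> Hy; apply: IH => //.
by move=> z Hz; apply: Hd; right.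
Qed.

Lemma dsat_dfold A B (k : B -> A -> distr R A) (P : A -> Prop) :
  (forall v a, P a -> dsat (fun y => 0 <= y.1 /\ P y.2) (k v a)) ->
  forall l s, P s -> dsat (fun y => 0 <= y.1 /\ P y.2) (dfold k l s).
Proof.
move=> Hk; elim=> [|v l IH] s Hs /=.
  by move=> y [<-|[]] /=; split.
by apply: dsat_dbind; [apply: Hk | apply: IH].
Qed.

Lemma dfold_comm A B (F : A -> A) (k : B -> A -> distr R A) :
  (forall v s f, Expect (k v (F s)) f = Expect (k v s) (fun x => f (F x))) ->
  forall l s f, Expect (dfold k l (F s)) f = Expect (dfold k l s) (fun x => f (F x)).
Proof.
move=> Hk; elim=> [|v l IH] s f /=; first by rewrite !Expect_dret.
rewrite !Expect_dbind Hk; congr Expect; apply: funext => x /=; exact: IH.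
Qed.

Lemma dfold_mass A B (k : B -> A -> distr R A) :
  (forall v s, Expect (k v s) (fun _ => 1) = 1) ->
  forall l s, Expect (dfold k l s) (fun _ => 1) = 1.
Proof.
move=> Hk; elim=> [|v l IH] s /=; first by rewrite !Expect_dret.
rewrite Expect_dbind (_ : (fun x => _) = fun _ => 1) ?Hk //.
by apply: funext => x; exact: IH.
Qed.

Lemma count_natr A (P : A -> bool) (l : seq A) :
  (count P l)%:R = \sum_(x <- l) (P x)%:R :> R.
Proof. elim: l => [|x l IH]; by rewrite ?big_nil ?big_cons //= natrD IH.
Qed.

End Gen.

Section Proc.
Variables (R : realType) (V : eqType) (nb : V -> seq V) (r : V) (p : V -> V)
          (alpha beta : R).
Hypothesis Ha : 0 <= alpha <= 1.
Hypothesis Hb : 0 <= beta <= 1.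

Definition flipz (j : nat) (z : seq bool) : seq bool :=
  mkseq (fun i => if i == j then ~~ nth true z i else nth true z i) (size z).

Lemma size_flipz j z : size (flipz j z) = size z.
Proof. by rewrite size_mkseq. Qed.

Lemma nth_flipz j z i : nth true (flipz j z) i =
  if (i == j) && (i < size z)%N then ~~ nth true z i else nth true z i.
Proof.
rewrite /flipz; case: (ltnP i (size z)) => H.
  by rewrite nth_mkseq // andbT.
by rewrite nth_default ?size_mkseq // andbF nth_default.
Qed.

Lemma flipz_id j z : (size z <= j)%N -> flipz j z = z.
Proof.
move=> H; apply: (@eq_from_nth _ true); rewrite ?size_flipz // => i Hi.
rewrite nth_flipz; case: eqP => //= ->; by rewrite ltnNge H.
Qed.

Lemma flipz_rcons j z b : flipz j (rcons z b) =
  if (j < size z)%N then rcons (flipz j z) b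
  else if j == size z then rcons z (~~ b) else rcons z b.
Proof.
case: ltngtP => H.
- apply: (@eq_from_nth _ true); rewrite ?size_flipz ?size_rcons ?size_flipz // => i Hi.
  rewrite nth_flipz !nth_rcons size_flipz nth_flipz size_rcons.
  case: (ltngtP i (size z)) => Hi2; case: (eqVneq i j) => Hij; subst;
    rewrite ?Hi ?Hi2 ?ltnn ?eqxx //=; try lia.
- by rewrite flipz_id // size_rcons.
- apply: (@eq_from_nth _ true); rewrite ?size_flipz ?size_rcons // => i Hi.
  rewrite nth_flipz !nth_rcons size_rcons H.
  case: (ltngtP i (size z)) => Hi2; case: (eqVneq i (size z)) => Hij; subst;
    rewrite ?Hi ?Hi2 ?ltnn ?eqxx //=; try lia.
Qed.

Definition flip j (s : pstate V) := PState (origin s) (flipz j (zs s)).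

Lemma gval_flipN j s v : (gval (flip j s) v == None) = (gval s v == None).
Proof. by rewrite /gval /=; case: (origin s v). Qed.

Lemma front_comm j o v s f :
  Expect (step_frontier p alpha o v (flip j s)) f =
  Expect (step_frontier p alpha o v s) (fun x => f (flip j x)).
Proof.
rewrite /step_frontier !Expect_cons !Expect_nil /flip /= size_flipz !flipz_rcons.
case: ltngtP => H //.
- by rewrite !flipz_id // ltnW.
- rewrite !flipz_id ?H //=; ring.
Qed.

Lemma inner_comm j o v s f :
  Expect (step_inner p beta o v (flip j s)) f =
  Expect (step_inner p beta o v s) (fun x => f (flip j x)).
Proof. by rewrite /step_inner !Expect_cons !Expect_nil /=. Qed.

Lemma pstep_comm j t s f :
  Expect (pstep nb r p alpha beta t (flip j s)) f =
  Expect (pstep nb r p alpha beta t s) (fun x => f (flip j x)).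
Proof.
rewrite /pstep.
have E1 : [seq v <- gball nb r t.+1 | (gval (flip j s) v == None) && (gval (flip j s) (p v) != None)]
   = [seq v <- gball nb r t.+1 | (gval s v == None) && (gval s (p v) != None)].
  by apply: eq_filter => v; rewrite !gval_flipN.
have E2 : [seq v <- gball nb r t | (gval (flip j s) v != None) && (v != r)]
   = [seq v <- gball nb r t | (gval s v != None) && (v != r)].
  by apply: eq_filter => v; rewrite !gval_flipN.
rewrite E1 E2 !Expect_dbind.
change (origin (flip j s)) with (origin s).
rewrite (dfold_comm (F := flip j)); last exact: front_comm.
congr Expect; apply: funext => x; apply: dfold_comm; exact: inner_comm.
Qed.

Lemma proc_flip j t f : (0 < j)%N ->
  Expect (proc nb r p alpha beta t) (fun x => f (flip j x)) =
  Expect (proc nb r p alpha beta t) f.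
Proof.
move=> Hj; elim: t f => [|t IH] f /=.
  rewrite !Expect_dret /flip /= flipz_id //.
rewrite !Expect_dbind.
rewrite (_ : (fun x => Expect (pstep nb r p alpha beta t x) (fun x0 => f (flip j x0))) =
   (fun x => Expect (pstep nb r p alpha beta t (flip j x)) f)); last first.
  by apply: funext => x; rewrite pstep_comm.
exact: (IH (fun x => Expect (pstep nb r p alpha beta t x) f)).
Qed.

Definition Inv (s : pstate V) := forall x i, origin s x = Some i -> (i < size (zs s))%N.
Definition Inv2 (o : V -> option nat) (s : pstate V) :=
  Inv s /\ forall x i, o x = Some i -> (i < size (zs s))%N.

Lemma front_sat o v s : Inv2 o s ->
  dsat (fun y => 0 <= y.1 /\ Inv2 o y.2) (step_frontier p alpha o v s).
Proof.
case/andP: Ha => Ha0 Ha1.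
move=> [H1 H2] y; rewrite /step_frontier /=.
case => [<-|[<-|[<-|[]]]] /=; (split; [lra|]); split => x i /=;
  rewrite /upd ?size_rcons.
- case: eqP => _; [exact: H2 | exact: H1].
- exact: H2.
- case: eqP => _; [by case=> <- | move/H1; apply: ltnW].
- by move/H2/ltnW.
- case: eqP => _; [by case=> <- | move/H1; apply: ltnW].
- by move/H2/ltnW.
Qed.

Lemma inner_sat o v s : Inv2 o s ->
  dsat (fun y => 0 <= y.1 /\ Inv2 o y.2) (step_inner p beta o v s).
Proof.
case/andP: Hb => Hb0 Hb1.
move=> [H1 H2] y; rewrite /step_inner /=.
case => [<-|[<-|[]]] /=; (split; [lra|]); try by split.
split => x i /=; rewrite /upd.
- case: eqP => _; [exact: H2 | exact: H1].
- exact: H2.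
Qed.

Lemma proc_sat t : dsat (fun y => 0 <= y.1 /\ Inv y.2) (proc nb r p alpha beta t).
Proof.
elim: t => [|t IH] /=.
  move=> y [<-|[]] /=; split => // x i /=; case: eqP => _ // [<-] //.
apply: dsat_dbind (IH) _ => s Hs.
rewrite /pstep.
move=> y Hy.
have := dsat_dbind (P := Inv2 (origin s)) (Q := Inv2 (origin s)) _ _ Hy.
case.
- apply: dsat_dfold; first exact: front_sat.
  by split.
- move=> a Ha'; apply: dsat_dfold => //; exact: inner_sat.
by move=> H0 [H1 _].
Qed.

Lemma proc_mass t : Expect (proc nb r p alpha beta t) (fun _ => 1) = 1.
Proof.
elim: t => [|t IH] /=; first by rewrite Expect_dret.
rewrite Expect_dbind (_ : (fun x => _) = fun _ => 1) //.
apply: funext => s; rewrite /pstep Expect_dbind.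
have Hi : forall l x, Expect (dfold (step_inner p beta (origin s)) l x) (fun _ => 1) = 1.
  move=> l x; apply: dfold_mass => v s'.
  by rewrite /step_inner !Expect_cons Expect_nil !mulr1 addr0 subrKC.
rewrite (@Expect_eqf _ _ _ _ (fun _ => 1)); last by move=> x; apply: Hi.
apply: dfold_mass => v s'.
by rewrite /step_frontier !Expect_cons Expect_nil !mulr1 addr0 addrA -addrA -splitr subrK.
Qed.

End Proc.

Lemma in_max A (d : seq A) (F : A -> nat) x :
  List.In x d -> (F x <= \max_(y <- d) F y)%N.
Proof.
elim: d => [|y d IH] //= [<-|H]; rewrite big_cons.
  exact: leq_maxl.
exact: leq_trans (IH H) (leq_maxr _ _).
Qed.

Lemma sum_ind (R : nzRingType) (n m : nat) : (m < n)%N ->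
  \sum_(j < n) ((m == j)%:R : R) = 1.
Proof.
move=> H; rewrite (bigD1 (Ordinal H)) //= eqxx big1 ?addr0 // => i Hi.
rewrite (_ : (m == i) = false) //; apply/negbTE; apply: contra Hi => /eqP Hm.
by apply/eqP; apply: val_inj => /=.
Qed.

Section Key.
Variables (R : realType) (V : eqType) (nb : V -> seq V) (r : V) (p : V -> V)
          (alpha beta : R).
Hypothesis Ha : 0 <= alpha <= 1.
Hypothesis Hb : 0 <= beta <= 1.

Definition hv (s : pstate V) (x : V) : R :=
  (gval s x == Some true)%:R - (gval s x == Some false)%:R.

Lemma hv_None s x : origin s x = None -> hv s x = 0.
Proof. by move=> E; rewrite /hv /gval E /= subrr. Qed.

Lemma hv_flip j s x : Inv s -> hv (flip j s) x =
  if origin s x == Some j then - hv s x else hv s x.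
Proof.
move=> HI; rewrite /hv /gval /=.
case E: (origin s x) => [i|] /=; last by [].
rewrite nth_flipz; case: (eqVneq i j) => [Hij|Hij] /=.
  subst; rewrite eqxx (HI _ _ E) /=.
  by case: (nth true (zs s) j) => /=; rewrite ?subr0 ?sub0r ?opprK.
have -> : (Some i == Some j) = false by apply/negbTE; apply: contra Hij => /eqP [->].
by [].
Qed.

Lemma hv_cases s x : hv s x = 0 \/ hv s x = 1 \/ hv s x = -1.
Proof.
rewrite /hv; case: (gval s x) => [[]|] /=; rewrite ?subr0 ?sub0r ?subrr; auto.
Qed.

Lemma key t u v :
  Expect (proc nb r p alpha beta t) (fun s => hv s u * hv s v) <=
  Expect (proc nb r p alpha beta t) (fun s => (origin s u == origin s v)%:R).
Proof.
set d := proc nb r p alpha beta t.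
have Hsat : dsat (fun y => 0 <= y.1 /\ Inv y.2) d := @proc_sat _ _ nb r p alpha beta Ha Hb t.
pose eqi s := (origin s u == origin s v).
pose G s := hv s u * hv s v * (~~ eqi s)%:R.
pose mx (s : pstate V) := maxn (odflt 0 (origin s u)) (odflt 0 (origin s v)).
have Hsplit : Expect d (fun s => hv s u * hv s v) =
   Expect d (fun s => hv s u * hv s v * (eqi s)%:R) + Expect d G.
  rewrite /Expect -big_split /=; apply: eq_bigr => x _.
  rewrite /G; case: (eqi x.2) => /=; ring.
have G0 : Expect d G = 0.
  pose M := (\max_(y <- d) (mx y.2).+1)%N.
  rewrite (@Expect_ext _ _ _ _ (fun s => \sum_(j < M) G s * ((mx s == j)%:R))); last first.
    move=> x Hx; rewrite -mulr_sumr sum_ind ?mulr1 //.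
    exact: (in_max (fun y => (mx y.2).+1) Hx).
  rewrite Expect_sum big1 // => [[j Hjlt]] _ /=.
  case: (posnP j) => Hj.
    rewrite (@Expect_eqf _ _ _ _ (fun _ => 0)); first by rewrite /Expect big1 // => x _; rewrite mulr0.
    move=> s; rewrite /G /eqi /mx Hj.
    case Eu: (origin s u) => [a|]; last by rewrite (hv_None (s:=s) (x:=u)) // !mul0r.
    case Ev: (origin s v) => [b|]; last by rewrite (hv_None (s:=s) (x:=v)) // mulr0 !mul0r.
    case: (eqVneq (maxn a b) 0) => Hab /=; last by rewrite mulr0.
    have [-> ->] : a = 0%N /\ b = 0%N by lia.
    by rewrite eqxx /= mulr0 mul0r.
  set E := Expect _ _.
  have : E = - E.
    rewrite {1}/E -(@proc_flip _ _ nb r p alpha beta Ha Hb j t _ Hj) /E -mulN1r -Expect_scale.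
    apply: Expect_ext => x /(Hsat x) [_ HI].
    rewrite /G /eqi /mx /= !hv_flip //.
    case: (eqVneq (origin x.2 u) (Some j)) => Hu;
      case: (eqVneq (origin x.2 v) (Some j)) => Hv.
    - by rewrite Hu Hv eqxx /=; ring.
    - ring.
    - ring.
    - have -> : (maxn (odflt 0 (origin x.2 u)) (odflt 0 (origin x.2 v)) == j) = false.
        move: Hu Hv; case: (origin x.2 u) => [a|]; case: (origin x.2 v) => [b|] /= Hu Hv;
          apply/negbTE/eqP => Hm.
        + have : a <> j by move=> E1; rewrite E1 eqxx in Hu.
          have : b <> j by move=> E1; rewrite E1 eqxx in Hv.
          lia.
        + have : a <> j by move=> E1; rewrite E1 eqxx in Hu.
          lia.
        + have : b <> j by move=> E1; rewrite E1 eqxx in Hv.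
          lia.
        + lia.
      by rewrite /= !mulr0.
  lra.
rewrite Hsplit G0 addr0; apply: Expect_le => x /(Hsat x) [W _].
apply: ler_wpM2l => //.
rewrite /eqi; case: eqP => /= E; last by rewrite !mulr0.
have Heq : hv x.2 u = hv x.2 v by rewrite /hv /gval E.
rewrite mulr1 -Heq; case: (hv_cases x.2 u) => [->|[->|->]]; lra.
Qed.
End Key.

Section Final.
Variables (R : realType) (V : eqType) (nb : V -> seq V) (r : V) (p : V -> V)
          (alpha beta : R).
Hypothesis Ha : 0 <= alpha <= 1.
Hypothesis Hb : 0 <= beta <= 1.

Lemma lam_sq t s : lambda_of R nb r t s ^+ 2 =
  ((size (gball nb r t))%:R ^+ 2)^-1 *
  \sum_(uv <- [seq (u, v) | u <- gball nb r t, v <- gball nb r t]) hv R s uv.1 * hv R s uv.2.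
Proof.
rewrite /lambda_of !count_natr -sumrB expr_div_n big_allpairs /= mulrC; congr (_ * _).
rewrite expr2 mulr_suml; apply: eq_bigr => x _; rewrite mulr_sumr; by apply: eq_bigr.
Qed.

Lemma coinc_eq t s : coinc_of R nb r t s =
  ((size (gball nb r t))%:R ^+ 2)^-1 *
  \sum_(uv <- [seq (u, v) | u <- gball nb r t, v <- gball nb r t])
     (origin s uv.1 == origin s uv.2)%:R.
Proof. by rewrite /coinc_of count_natr mulrC. Qed.

Lemma dev_bound t eta : 0 < eta ->
  dev_prob nb r p alpha beta t eta <= p_coinc nb r p alpha beta t / eta ^+ 2.
Proof.
move=> He.
set d := proc nb r p alpha beta t.
set m := Elambda nb r p alpha beta t.
have He2 : 0 < eta ^+ 2 by rewrite exprn_gt0.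
apply: (@le_trans _ _ (Expect d (fun s => (eta ^+ 2)^-1 * (lambda_of R nb r t s - m) ^+ 2))).
  apply: Prob_le => x /(@proc_sat _ _ nb r p alpha beta Ha Hb t x) [W _].
  case: ifP => H.
    apply: ler_peMr => //.
    rewrite mulrC ler_pdivlMr // mul1r.
    rewrite -[(_ - m) ^+ 2]real_normK ?num_real //.
    have H0 : 0 <= eta by apply: ltW.
    move: H; set a := `|_|; move=> H; nra.
  by rewrite mulr_ge0 // mulr_ge0 ?invr_ge0 ?sqr_ge0 // ltW.
rewrite Expect_scale mulrC ler_pM2r ?invr_gt0 //.
rewrite Expect_var -/(Elambda nb r p alpha beta t) -/m -/d proc_mass.
apply: (@le_trans _ _ (Expect d (fun s => lambda_of R nb r t s ^+ 2))).
  have := sqr_ge0 m; lra.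
rewrite /p_coinc -/d.
rewrite (@Expect_eqf _ _ _ _ _ (lam_sq t)) (@Expect_eqf _ _ _ _ _ (coinc_eq t)).
rewrite !Expect_scale ler_wpM2l ?invr_ge0 ?exprn_ge0 // !Expect_sum.
apply: ler_sum => uv _; exact: key.
Qed.

End Final.

Theorem mainTheorem14 (R : realType) (V : eqType) (nb : V -> seq V) (r : V)
    (p : V -> V) (alpha beta : R) :
  0 < alpha < 1 -> 0 < beta < 1 ->
  (forall x y : V, (y \in nb x) = (x \in nb y)) ->
  (forall x : V, x \notin nb x) ->
  (forall x : V, exists t, x \in gball nb r t) ->
  is_bfs_parent nb r p ->
  ((p_coinc nb r p alpha beta @ \oo --> 0%R) ->
     forall eta : R, 0 < eta ->
       exists t0 : nat, forall t : nat, (t0 <= t)%N ->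
         dev_prob nb r p alpha beta t eta < eta)
  /\
  (forall c1 c2 : R, 0 < c1 -> 0 < c2 ->
     (forall t : nat, p_coinc nb r p alpha beta t <= expR (- (c1 * t%:R `^ c2))) ->
     exists c3 c4 c5 c6 : R, [/\ 0 < c3, 0 < c4, 0 < c5 & 0 < c6] /\
       exists t1 : nat, forall t : nat, (t1 <= t)%N ->
         dev_prob nb r p alpha beta t (expR (- (c3 * t%:R `^ c4)))
           <= expR (- (c5 * t%:R `^ c6))).
Proof.
move=> /andP [Ha0 Ha1] /andP [Hb0 Hb1] _ _ _ _.
have Ha : 0 <= alpha <= 1 by rewrite !ltW.
have Hb : 0 <= beta <= 1 by rewrite !ltW.
split.
  move=> Hcv eta He.
  have He3 : 0 < eta ^+ 3 by rewrite exprn_gt0.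
  move/cvgr_dist_lt: Hcv => /(_ _ He3) [N _ HN].
  exists N => t Ht.
  apply: le_lt_trans (dev_bound nb r p Ha Hb t He) _.
  rewrite ltr_pdivrMr ?exprn_gt0 //.
  have := HN t Ht; rewrite sub0r normrN => H.
  apply: le_lt_trans (ler_norm _) _.
  by rewrite -exprS.
move=> c1 c2 H1 H2 Hp.
exists (c1 / 4), c2, (c1 / 2), c2; split.
  by split => //; apply: divr_gt0.
exists 0%N => t _.
set y := t%:R `^ c2.
apply: le_trans (dev_bound nb r p Ha Hb t (expR_gt0 _)) _.
rewrite ler_pdivrMr ?exprn_gt0 ?expR_gt0 //.
apply: le_trans (Hp t) _.
rewrite expr2 -!expRD ler_expR -/y.
have : 0 <= y by apply: powR_ge0.
lra.
Qed.
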